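(* Let $W\in\mathbb{D}_n$ be a Dale matrix with excitatory neurons $\mathcal{E}$ and inhibitory neurons $\mathcal{I}$, satisfying the Ground Assumption, and let $W'\in\mathbb{D}_n$ (same partition) be defined by $W'_{ij}=0$ for all $i\in\mathcal{I}$, $j\in\mathcal{E}$, and $W'_{ij}=W_{ij}$ otherwise. Then $\mathcal{C}(W)=\mathcal{C}(W')$.
   Context: Threshold-linear network: for $W\in\mathbb{R}^{n\times n}$ and $b\in\mathbb{R}^n$, the dynamics are $\dot x_i=-x_i+[\sum_{j=1}^n W_{ij}x_j+b_i]_+$, where $[y]_+=\max(0,y)$. A fixed point is $x^*\in\mathbb{R}^n$ with $x^*=[Wx^*+b]_+$. A Dale matrix $W\in\mathbb{D}_n$ is an $n\times n$ real matrix with a partition $[n]=\mathcal{E}\sqcup\mathcal{I}$ (excitatory/inhibitory) such that $W_{ii}=0$, $W_{ji}\ge0$ for all $j$ when $i\in\mathcal{E}$, and $W_{ji}\le0$ for all $j$ when $i\in\mathcal{I}$. Ground Assumption: for every nonempty $\sigma\subset[n]$, the principal submatrix $(I-W)_\sigma$ is nonsingular. Excitatory support: $\mathrm{supp}_+x=\{i\in\mathcal{E}:x_i>0\}$. Combinatorial code: $\mathcal{C}(W)=\{\mathrm{supp}_+x^*: b\in\mathbb{R}^n_{\ge0},\ x^*\in\mathbb{R}^n_{\ge0}\text{ a fixed point of }(W,b)\}$. *)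

(* Defs.v *)
From mathcomp Require Import all_boot all_order all_algebra.
Set Implicit Arguments. Unset Strict Implicit. Unset Printing Implicit Defensive.
Import Order.TTheory GRing.Theory Num.Theory.
Local Open Scope ring_scope.

(* Neurons are indexed by 'I_n; E : {set 'I_n} is the excitatory set,
   the inhibitory set is its complement ~: E. *)

Definition dale (R : realFieldType) (n : nat) (W : 'M[R]_n) (E : {set 'I_n}) : Prop :=
  (forall i, W i i = 0) /\
  (forall i j, i \in E -> 0 <= W j i) /\
  (forall i j, i \notin E -> W j i <= 0).

Definition principal_submx (R : pzRingType) (n : nat) (A : 'M[R]_n) (sigma : {set 'I_n})
  : 'M[R]_#|sigma| :=
  \matrix_(i, j) A (enum_val i) (enum_val j).

Definition ground_assumption (R : realFieldType) (n : nat) (W : 'M[R]_n) : Prop :=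
  forall sigma : {set 'I_n}, sigma != set0 ->
    principal_submx (1%:M - W) sigma \in unitmx.

Definition relu (R : realFieldType) (y : R) : R := Num.max 0 y.

Definition tln_fixed_point (R : realFieldType) (n : nat) (W : 'M[R]_n) (b x : 'cV[R]_n) : Prop :=
  forall i, x i 0 = relu ((W *m x) i 0 + b i 0).

Definition supp_plus (R : realFieldType) (n : nat) (E : {set 'I_n}) (x : 'cV[R]_n) : {set 'I_n} :=
  [set i in E | 0 < x i 0].

Definition comb_code (R : realFieldType) (n : nat) (W : 'M[R]_n) (E : {set 'I_n})
  : {set 'I_n} -> Prop :=
  fun S => exists (b x : 'cV[R]_n),
    (forall i, 0 <= b i 0) /\ (forall i, 0 <= x i 0) /\
    tln_fixed_point W b x /\ supp_plus E x = S.

Definition drop_EI (R : realFieldType) (n : nat) (W : 'M[R]_n) (E : {set 'I_n}) : 'M[R]_n :=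
  \matrix_(i, j) (if (i \notin E) && (j \in E) then 0 else W i j).

(* Main.v *)
Require Import Defs.
From mathcomp Require Import all_boot all_order all_algebra.
From mathcomp Require Import lra.
Import Order.TTheory GRing.Theory Num.Theory.
Local Open Scope ring_scope.

Set Implicit Arguments.
Section H.
Variables (R : realFieldType) (n : nat) (W : 'M[R]_n) (E : {set 'I_n}).
Hypothesis hD : dale W E.

Let D := W - drop_EI W E.

Lemma DE i j : D i j = if (i \notin E) && (j \in E) then W i j else 0.
Proof. by rewrite /D !mxE; case: ifP => _; rewrite ?subr0 ?subrr. Qed.

Lemma relu_id (y : R) : 0 <= y -> relu y = y.
Proof. by move=> h; rewrite /relu max_r. Qed.

Lemma WxE (x : 'cV[R]_n) i : (W *m x) i 0 = (drop_EI W E *m x) i 0 + (D *m x) i 0.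
Proof. by rewrite -[in LHS](subrK (drop_EI W E) W) mulmxDl mxE addrC. Qed.

Lemma Dx_ge0 (x : 'cV[R]_n) : (forall j, 0 <= x j 0) -> forall i, 0 <= (D *m x) i 0.
Proof.
move=> hx i; rewrite mxE; apply: sumr_ge0 => j _; rewrite DE.
case: ifP => [/andP[_ jE]|_]; last by rewrite mul0r.
by apply: mulr_ge0 => //; case: hD => _ [h _]; apply: h.
Qed.

Lemma Dx_E (x : 'cV[R]_n) i : i \in E -> (D *m x) i 0 = 0.
Proof. by move=> iE; rewrite mxE big1 // => j _; rewrite DE iE /= mul0r. Qed.

Lemma WDx_le0 (x : 'cV[R]_n) : (forall j, 0 <= x j 0) -> forall i, (W *m (D *m x)) i 0 <= 0.
Proof.
move=> hx i; rewrite -oppr_ge0 mxE -sumrN; apply: sumr_ge0 => j _.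
case: (boolP (j \in E)) => jE; first by rewrite Dx_E // mulr0 oppr0.
rewrite -mulNr; apply: mulr_ge0; last exact: Dx_ge0.
by rewrite oppr_ge0; case: hD => _ [_ h]; apply: h.
Qed.

Lemma dropx_le0 (x : 'cV[R]_n) : (forall j, 0 <= x j 0) -> forall i, i \notin E ->
  (drop_EI W E *m x) i 0 <= 0.
Proof.
move=> hx i iE; rewrite -oppr_ge0 mxE -sumrN; apply: sumr_ge0 => j _.
rewrite mxE iE /=; case: ifP => jE; first by rewrite mul0r oppr0.
rewrite -mulNr; apply: mulr_ge0 => //.
by rewrite oppr_ge0; case: hD => _ [_ h]; apply: h; rewrite jE.
Qed.

Lemma dropx_E (x : 'cV[R]_n) i : i \in E -> (drop_EI W E *m x) i 0 = (W *m x) i 0.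
Proof. by move=> iE; rewrite !mxE; apply: eq_bigr => j _; rewrite mxE iE. Qed.

End H.

Theorem mainTheorem2 (R : realFieldType) (n : nat) (W : 'M[R]_n) (E : {set 'I_n}) :
  dale W E -> ground_assumption W ->
  forall S : {set 'I_n}, comb_code W E S <-> comb_code (drop_EI W E) E S.
Proof.
move=> hD _ S; set D := W - drop_EI W E; split.
- move=> [b [x [hb [hx [hfp hs]]]]].
  exists (b + D *m x), x; split; first by move=> i; rewrite mxE addr_ge0 // Dx_ge0.
  split=> //; split=> // i.
  rewrite {1}hfp; congr relu; rewrite (@WxE R n W E x i) [(b + D *m x) i 0]mxE; lra.
- move=> [b [x [hb [hx [hfp hs]]]]].
  pose d := D *m x; pose z := x + d.
  have hd := @Dx_ge0 R n W E hD x hx; have hWd := @WDx_le0 R n W E hD x hx.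
  have hz : forall i, 0 <= z i 0 by move=> i; rewrite mxE addr_ge0.
  have zE : forall i, i \in E -> z i 0 = x i 0.
    by move=> i iE; rewrite mxE Dx_E // addr0.
  have Wz : forall i, (W *m z) i 0 = (W *m x) i 0 + (W *m d) i 0.
    by move=> i; rewrite mulmxDr mxE.
  exists (\col_i (if i \in E then b i 0 - (W *m d) i 0 else z i 0 - (W *m z) i 0)), z.
  split.
    move=> i; rewrite mxE; case: ifP => iE.
      by have := hb i; have := hWd i; rewrite -/d; lra.
    have := hx i; have := hWd i; have := @dropx_le0 R n W E hD x hx i (negbT iE).
    rewrite Wz (@WxE R n W E x i) -/D -/d [z i 0]mxE; lra.
  split; first by [].
  split.
    move=> i; rewrite [in X in relu (_ + X)]mxE; case: ifP => iE.
      rewrite (zE i iE) {1}(hfp i) Wz -(@dropx_E R n W E x i iE); congr relu; lra.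
    have -> : (W *m z) i 0 + (z i 0 - (W *m z) i 0) = z i 0 by lra.
    by rewrite relu_id.
  rewrite -hs; apply/setP => i; rewrite !inE.
  by case: (boolP (i \in E)) => //= iE; rewrite zE.
Qed.
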